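(* Let $h_0>0$, $U>2h_0$, $|h|\le h_0$, and let $e,e'\in\mathscr B_\Lambda$ be distinct nearest-neighbour bonds. Then \[ P\Bigl(\mathrm{ad}_{\mathcal I_h((T_e)^{\rm off})}\bigl((T_{e'})^{\rm off}\bigr)\Bigr)^{\rm diag}P=0 . \]
   Context: $\Lambda=(\mathbb Z/L\mathbb Z)^d$, $L\in2\mathbb N$, $\mathscr B_\Lambda$ its unordered nearest-neighbour bonds. Fermionic Fock space over $\ell^2(\Lambda)\otimes\mathbb C^2$ with CAR operators $c_{x\sigma}$, $n_{x\sigma}=c^*_{x\sigma}c_{x\sigma}$, $n_x=n_{x\uparrow}+n_{x\downarrow}$; $\mathcal H^{\rm hf}_\Lambda=\ker(\sum_xn_x-|\Lambda|)$; $D_\Lambda=\sum_xn_{x\uparrow}n_{x\downarrow}$; $\eta_x=(-1)^{x_1+\dots+x_d}$; $M_\Lambda=\sum_x\eta_x\frac12(n_{x\uparrow}-n_{x\downarrow})$. All operators act on $\mathcal H^{\rm hf}_\Lambda$. $P$ is the projection onto $\ker D_\Lambda$ in $\mathcal H^{\rm hf}_\Lambda$ (singly occupied configurations). $P_m$ is the spectral projection of $D_\Lambda$ at eigenvalue $m$; $B^{(k)}=\sum_mP_{m+k}BP_m$, $B^{\rm diag}=B^{(0)}$, $B^{\rm off}=\sum_{k\ne0}B^{(k)}$. For $e=\{x,y\}$, $T_e=-t\sum_\sigma(c^*_{x\sigma}c_{y\sigma}+c^*_{y\sigma}c_{x\sigma})$ ($t\in\mathbb R$). For an operator $A$ supported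 on $X$ of grade $k\ne0$, $\mathcal I_h(A)=\frac1{kU}\sum_{n\ge0}(\frac h{kU})^n\mathrm{ad}^{\,n}_{M_\Lambda}(A)$ with $\mathrm{ad}_S(A)=[S,A]$, and $\mathcal I_h(T_e^{\rm off}):=\sum_{k\ne0}\mathcal I_h((T_e)^{(k)})$. *)

(* Defs.v *)
(* Half-filled Hubbard model on the
   torus (Z/LZ)^d, fermionic Fock space realised concretely in the
   occupation-number basis (Jordan-Wigner representation of the CAR). *)
From HB Require Import structures.
From mathcomp Require Import all_boot all_order all_algebra.
From mathcomp Require Import all_classical all_reals all_analysis.
From mathcomp Require Import complex.
Import numFieldTopology.Exports numFieldNormedType.Exports.
Import Order.TTheory GRing.Theory Num.Theory.

Set Implicit Arguments.
Unset Strict Implicit.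
Unset Printing Implicit Defensive.

Local Open Scope ring_scope.
Local Open Scope complex_scope.
Local Open Scope classical_set_scope.

(* The complex numbers C = R[i] over a real field R, with its topology
   (needed for limits of matrix-valued series). *)
Definition Cx (R : realType) : Type := R[i].
HB.instance Definition _ (R : realType) := GRing.ClosedField.on (Cx R).
HB.instance Definition _ (R : realType) := Num.ClosedField.on (Cx R).
HB.instance Definition _ (R : realType) :=
  PseudoPointedMetric.copy (Cx R) (Cx R)^o.

Definition rC (R : realType) (x : R) : Cx R := x%:C.

Definition site (L d : nat) : finType := {ffun 'I_d -> 'I_L}.

Definition nn (L d : nat) (x y : site L d) : Prop :=
  exists i : 'I_d,
    (forall j : 'I_d, j != i -> x j = y j) /\
    ((nat_of_ord (y i) = ((nat_of_ord (x i)).+1 %% L)%N) \/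
     (nat_of_ord (x i) = ((nat_of_ord (y i)).+1 %% L)%N)).

Definition eta (R : realType) (L d : nat) (x : site L d) : Cx R :=
  (-1) ^+ (\sum_(i < d) nat_of_ord (x i))%N.

(* one-particle modes (x, sigma), sigma = true for spin up *)
Definition mode (L d : nat) : finType := (site L d * bool)%type.
(* occupation-number configurations: basis of the Fock space *)
Definition config (L d : nat) : finType := {ffun mode L d -> bool}.

Definition fockdim (L d : nat) : nat := #|{: config L d}|.
Definition fockop (R : realType) (L d : nat) : Type :=
  'M[Cx R]_(fockdim L d).

Definition fock_mx (R : realType) (L d : nat)
    (f : config L d -> config L d -> Cx R) : fockop R L d :=
  \matrix_(i, j) f (enum_val i) (enum_val j).

Definition empty_mode (L d : nat) (b : config L d) (m : mode L d) : config L d :=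
  [ffun m' => if m' == m then false else b m'].

Definition jw_sign (R : realType) (L d : nat) (b : config L d) (m : mode L d)
  : Cx R :=
  (-1) ^+ #|[set m' : mode L d | (enum_rank m' < enum_rank m)%N && b m']|.

Definition annih (R : realType) (L d : nat) (m : mode L d) : fockop R L d :=
  fock_mx (fun a b => if b m && (a == empty_mode b m) then jw_sign R b m else 0).

Definition adjmx (R : realType) (n : nat) (A : 'M[Cx R]_n) : 'M[Cx R]_n :=
  \matrix_(i, j) conjc (A j i).

Definition creat (R : realType) (L d : nat) (m : mode L d) : fockop R L d :=
  adjmx (annih R m).

Definition numop (R : realType) (L d : nat) (m : mode L d) : fockop R L d :=
  creat R m *m annih R m.

Definition hopF (R : realType) (L d : nat) (t : R) (x y : site L d)
  : fockop R L d :=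
  - rC t *: \sum_(s : bool)
      (creat R (x, s) *m annih R (y, s) + creat R (y, s) *m annih R (x, s)).

Definition DF (R : realType) (L d : nat) : fockop R L d :=
  \sum_(x : site L d) (numop R (x, true) *m numop R (x, false)).

Definition MF (R : realType) (L d : nat) : fockop R L d :=
  \sum_(x : site L d)
     (eta R x * 2^-1) *: (numop R (x, true) - numop R (x, false)).

(* H^hf = ker(N - |Lambda|), spanned by configurations with |Lambda| particles *)
Definition hfconf (L d : nat) : finType :=
  {b : config L d | #|[set m : mode L d | b m]| == #|{: site L d}|}.

Definition hfdim (L d : nat) : nat := #|{: hfconf L d}|.
Definition hfop (R : realType) (L d : nat) : Type := 'M[Cx R]_(hfdim L d).

(* restriction to H^hf of an operator preserving particle number *)
Definition to_hf (R : realType) (L d : nat) (A : fockop R L d) : hfop R L d :=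
  \matrix_(i, j) A (enum_rank (val (enum_val i))) (enum_rank (val (enum_val j))).

Definition T_e (R : realType) (L d : nat) (t : R) (x y : site L d)
  : hfop R L d := to_hf (hopF t x y).
Definition D_L (R : realType) (L d : nat) : hfop R L d := to_hf (DF R L d).
Definition M_L (R : realType) (L d : nat) : hfop R L d := to_hf (MF R L d).

Definition is_spec_proj (R : realType) (n : nat) (A : 'M[Cx R]_n) (lam : Cx R)
    (Q : 'M[Cx R]_n) : Prop :=
  Q *m Q = Q /\ adjmx Q = Q /\
  (forall v : 'cV[Cx R]_n, (A - lam%:M) *m v = 0 <-> Q *m v = v).

Definition spec_proj (R : realType) (n : nat) (A : 'M[Cx R]_n) (lam : Cx R)
  : 'M[Cx R]_n := get (is_spec_proj A lam).

Definition Pm (R : realType) (L d : nat) (m : int) : hfop R L d :=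
  spec_proj (D_L R L d) (m%:~R).

Definition Pker (R : realType) (L d : nat) : hfop R L d :=
  spec_proj (D_L R L d) 0.

(* grading: B^(k) = sum_m P_{m+k} B P_m ; the eigenvalues of D_Lambda
   (number of doubly occupied sites) lie in {0,..,|Lambda|}, and P_m = 0
   for any other m, so summing over m in {0..|Lambda|} is the full sum. *)
Definition grade (R : realType) (L d : nat) (k : int) (B : hfop R L d)
  : hfop R L d :=
  \sum_(m < #|{: site L d}|.+1)
     (Pm R L d ((m%:Z) + k) *m B *m Pm R L d (m%:Z)).

Definition diagpart (R : realType) (L d : nat) (B : hfop R L d) : hfop R L d :=
  grade 0 B.

(* B^off = sum_{k != 0} B^(k), with k in [-|Lambda|, |Lambda|]
   (all other grades vanish) *)
Definition kval (L d : nat) (k : 'I_(#|{: site L d}|.*2.+1)) : int :=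
  (k%:Z - (#|{: site L d}|)%:Z)%R.

Definition offpart (R : realType) (L d : nat) (B : hfop R L d) : hfop R L d :=
  \sum_(k < #|{: site L d}|.*2.+1 | kval k != 0) grade (kval k) B.

Definition ad (R : realType) (n : nat) (S A : 'M[Cx R]_n) : 'M[Cx R]_n :=
  S *m A - A *m S.

Definition Ih (R : realType) (L d : nat) (U h : R) (k : int) (A : hfop R L d)
  : hfop R L d :=
  lim ((fun N : nat =>
          (rC (k%:~R * U))^-1 *:
            \sum_(n < N) ((rC h / rC (k%:~R * U)) ^+ n) *:
                          iter n (ad (M_L R L d)) A) @ \oo).

Definition Ih_off (R : realType) (L d : nat) (U h : R) (B : hfop R L d)
  : hfop R L d :=
  \sum_(k < #|{: site L d}|.*2.+1 | kval k != 0)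
     Ih U h (kval k) (grade (kval k) B).

(* Main.v *)
Require Import Defs.
From HB Require Import structures.
From mathcomp Require Import all_boot all_order all_algebra.
From mathcomp Require Import all_classical all_reals all_analysis.
From mathcomp Require Import complex.
Import numFieldTopology.Exports numFieldNormedType.Exports.
Import Order.TTheory GRing.Theory Num.Theory.
Local Open Scope ring_scope.
Local Open Scope classical_set_scope.
Lemma lim_entry0 (R : realType) n (u : nat -> 'M[Cx R]_n) i j :
  (forall N, u N i j = 0) -> (lim (u @ \oo)) i j = 0.
Proof.
move=> u0.
have [cv|ncv] := pselect (cvg (u @ \oo)).
  set M := lim _ in cv *.
  have cv' : (fun N => u N i j) @ \oo --> M i j.
    apply/cvg_app_entourageP => A entA.
    have h := (@cvg_mx_entourageP (Cx R) n n (u @ \oo) (fmap_filter _ eventually_filter) M).1 cv A entA.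
    move: h; apply: (@filterS _ _ eventually_filter) => N /=.
    by move=> /(_ i j); rewrite inE.
  have e : (fun N => u N i j) = fun _ => 0 by apply/funext=> N; exact: u0.
  rewrite e in cv'.
  have c0 : (fun _ : nat => (0 : Cx R)) @ \oo --> (0 : Cx R) by apply: cvg_cst.
  have hs : hausdorff_space (Cx R) := @norm_hausdorff _ (Cx R)^o.
  have pf : ProperFilter ((fun _ : nat => (0 : Cx R)) @ \oo) by exact: _.
  by have := @cvg_unique _ hs _ pf _ _ c0 cv'.
rewrite /lim /lim_in getPN; first by rewrite mxE.
by move=> M cM; apply: ncv; apply: cvgP cM.
Qed.
Local Close Scope classical_set_scope.

Set Implicit Arguments.
Unset Strict Implicit.
Unset Printing Implicit Defensive.

Lemma mul_diag_l (R : realType) n p (A : 'M[Cx R]_n) (B : 'M[Cx R]_(n,p)) i j :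
  (forall k, k != i -> A i k = 0) -> (A *m B) i j = A i i * B i j.
Proof.
move=> hA; rewrite mxE (bigD1 i) //= big1 ?addr0 // => k hk.
by rewrite hA ?mul0r.
Qed.

Lemma mul_diag_r (R : realType) n p (A : 'M[Cx R]_(p,n)) (B : 'M[Cx R]_n) i j :
  (forall k, k != j -> B k j = 0) -> (A *m B) i j = A i j * B j j.
Proof.
move=> hB; rewrite mxE (bigD1 j) //= big1 ?addr0 // => k hk.
by rewrite hB ?mulr0.
Qed.

Lemma scaleE (R : realType) n (a : Cx R) (A : 'M[Cx R]_n) i j :
  (a *: A) i j = a * A i j.
Proof. by rewrite mxE. Qed.
Lemma subE (R : realType) n (A B : 'M[Cx R]_n) i j :
  (A - B) i j = A i j - B i j.
Proof. by rewrite !mxE. Qed.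
Lemma addE (R : realType) n (A B : 'M[Cx R]_n) i j :
  (A + B) i j = A i j + B i j.
Proof. by rewrite !mxE. Qed.

Lemma sum_neq0 (V : zmodType) (I : finType) (P : pred I) (F : I -> V) :
  \sum_(k | P k) F k != 0 -> exists2 k, P k & F k != 0.
Proof.
move=> h; have [//|hn] := pselect (exists2 k, P k & F k != 0).
case/negP: h; apply/eqP; apply: big1 => k Pk; apply/eqP/negP => Fk.
by apply: hn; exists k => //; apply/negP.
Qed.

Lemma empty_inj L d (b b' : config L d) m :
  b m -> b' m -> empty_mode b m = empty_mode b' m -> b = b'.
Proof.
move=> hb hb' e; apply/ffunP => m'.
case: (eqVneq m' m) => [->|ne]; first by rewrite hb hb'.
by have := congr1 (fun f : config L d => f m') e; rewrite !ffunE (negbTE ne).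
Qed.

Lemma jw_sign_conj (R : realType) L d (b : config L d) m :
  conjc (jw_sign R b m) * jw_sign R b m = 1.
Proof.
rewrite /jw_sign rmorphXn rmorphN1 -exprMn mulrNN mulr1 expr1n //.
Qed.

Definition hop1 L d (a b : config L d) (m1 m2 : mode L d) : bool :=
  [&& a m1, b m2 & empty_mode a m1 == empty_mode b m2].

Lemma annihE (R : realType) L d m (i j : 'I_(fockdim L d)) :
  annih R m i j = if (enum_val j) m && (enum_val i == empty_mode (enum_val j) m)
                  then jw_sign R (enum_val j) m else 0.
Proof. by rewrite /annih /fock_mx mxE. Qed.

Lemma creatE (R : realType) L d m (i j : 'I_(fockdim L d)) :
  creat R m i j = conjc (annih R m j i).
Proof. by rewrite /creat /adjmx mxE. Qed.

Lemma ca_entry (R : realType) L d m1 m2 (i j : 'I_(fockdim L d)) :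
  (creat R m1 *m annih R m2) i j != 0 ->
  hop1 (enum_val i) (enum_val j) m1 m2.
Proof.
apply: contraNT => H; rewrite mxE big1 // => k _.
rewrite creatE !annihE.
case: ifP => [/andP[h1 /eqP h2]|_]; last by rewrite conjc0 mul0r.
case: ifP => [/andP[h3 /eqP h4]|_]; last by rewrite mulr0.
by move: H; rewrite /hop1 h1 h3 -h2 h4 eqxx.
Qed.

Lemma numopE (R : realType) L d m (i j : 'I_(fockdim L d)) :
  numop R m i j = ((i == j) && enum_val i m)%:R.
Proof.
rewrite /numop mxE (bigD1 (enum_rank (empty_mode (enum_val i) m))) //=.
rewrite big1 ?addr0; last first.
  move=> k hk; rewrite creatE annihE.
  case: ifP => [/andP[_ /eqP e]|_]; last by rewrite conjc0 mul0r.
  by move: hk; rewrite -e enum_valK eqxx.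
rewrite creatE !annihE enum_rankK eqxx andbT.
case: (eqVneq i j) => [<-|ne] /=.
  case: ifP => hi; last by rewrite conjc0 mul0r.
  by rewrite eqxx /= jw_sign_conj.
case: ifP => hi; last by rewrite conjc0 mul0r.
case: ifP => [/andP[hj /eqP e]|_]; last by rewrite mulr0.
by move: ne; rewrite (enum_val_inj (empty_inj hi hj e)) eqxx.
Qed.

Definition Dval L d (b : config L d) : nat :=
  (\sum_(x : site L d) (b (x, true) && b (x, false)))%N.

Lemma DF_entry (R : realType) L d (i j : 'I_(fockdim L d)) :
  DF R L d i j = if i == j then (Dval (enum_val i))%:R else 0.
Proof.
have E x : (numop R (x,true) *m numop R (x,false)) i j =
   ((i == j) && (enum_val i (x,true) && enum_val i (x,false)))%:R.
  rewrite mul_diag_l; last by move=> k hk; rewrite numopE eq_sym (negbTE hk).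
  rewrite !numopE eqxx /=.
  by case: (i == j); case: (enum_val i (x,true)); case: (enum_val i (x,false));
    rewrite ?mul1r ?mul0r.
rewrite /DF summxE (eq_bigr _ (fun x _ => E x)).
case: (eqVneq i j) => [e|ne]; first subst j.
  by rewrite /Dval natr_sum; apply: eq_bigr => x _.
by apply: big1 => x _.
Qed.

Definition hv L d (i : 'I_(hfdim L d)) : config L d := val (enum_val i).

Lemma hv_inj L d : injective (@hv L d).
Proof. by move=> i j /val_inj /enum_val_inj. Qed.

Lemma to_hfE (R : realType) L d (A : fockop R L d) i j :
  to_hf A i j = A (enum_rank (hv i)) (enum_rank (hv j)).
Proof. by rewrite mxE. Qed.

Lemma D_LE (R : realType) L d (i j : 'I_(hfdim L d)) :
  D_L R L d i j = if i == j then (Dval (hv i))%:R else 0.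
Proof.
by rewrite /D_L to_hfE DF_entry enum_rankK (inj_eq enum_rank_inj) (inj_eq (@hv_inj L d)).
Qed.

Lemma M_Ldiag (R : realType) L d (i j : 'I_(hfdim L d)) :
  i != j -> M_L R L d i j = 0.
Proof.
move=> ne; rewrite /M_L to_hfE /MF summxE big1 // => x _.
rewrite (@scaleE R) (@subE R) !numopE (inj_eq enum_rank_inj) (inj_eq (@hv_inj L d)) (negbTE ne).
by rewrite /= subrr mulr0.
Qed.

Lemma T_e_supp (R : realType) L d (t : R) (x y : site L d) (i j : 'I_(hfdim L d)) :
  T_e t x y i j != 0 ->
  exists s, hop1 (hv i) (hv j) (x,s) (y,s) || hop1 (hv i) (hv j) (y,s) (x,s).
Proof.
rewrite /T_e to_hfE /hopF (@scaleE R) mulf_eq0 negb_or => /andP[_].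
rewrite summxE => /sum_neq0 [s _]; rewrite (@addE R) => h; exists s.
have [h1|h1] := eqVneq ((creat R (x, s) *m annih R (y, s))
   (enum_rank (hv i)) (enum_rank (hv j))) 0.
  move: h; rewrite h1 add0r => /ca_entry; rewrite !enum_rankK => ->.
  by rewrite orbT.
by move: h1 => /ca_entry; rewrite !enum_rankK => ->.
Qed.

Lemma col_mulr (R : realType) n (A B : 'M[Cx R]_n) j :
  A *m col j B = col j (A *m B).
Proof. by apply/matrixP => i k; rewrite !mxE; apply: eq_bigr => l _; rewrite !mxE. Qed.

Lemma adjmx_mul (R : realType) n (A B : 'M[Cx R]_n) :
  adjmx (A *m B) = adjmx B *m adjmx A.
Proof.
apply/matrixP => i j; rewrite !mxE rmorph_sum; apply: eq_bigr => k _.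
by rewrite !mxE rmorphM mulrC.
Qed.

Lemma spec_uniq (R : realType) n (A : 'M[Cx R]_n) lam Q1 Q2 :
  is_spec_proj A lam Q1 -> is_spec_proj A lam Q2 -> Q1 = Q2.
Proof.
have key (Q Q' : 'M[Cx R]_n) : Q *m Q = Q ->
   (forall v : 'cV[Cx R]_n, (A - lam%:M) *m v = 0 <-> Q *m v = v) ->
   (forall v : 'cV[Cx R]_n, (A - lam%:M) *m v = 0 <-> Q' *m v = v) -> Q' *m Q = Q.
  move=> iQ hQ hQ'; apply/matrixP => i j.
  have hc : Q' *m col j Q = col j Q.
    apply: (proj1 (hQ' (col j Q))); apply: (proj2 (hQ (col j Q))).
    by rewrite col_mulr iQ.
  move: hc.
  rewrite col_mulr => /(congr1 (fun M : 'cV_n => M i 0)).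
  by rewrite [LHS]mxE [RHS]mxE.
move=> [i1 [a1 h1]] [i2 [a2 h2]].
have e21 := key _ _ i1 h1 h2.
have e12 := key _ _ i2 h2 h1.
by rewrite -a1 -e21 adjmx_mul a1 a2 e12.
Qed.

Definition Qd (R : realType) L d (lam : Cx R) : hfop R L d :=
  \matrix_(i, j) ((i == j) && ((Dval (hv i))%:R == lam))%:R.

Arguments Qd {R L d} lam.

Lemma Qd_diag (R : realType) L d (lam : Cx R) (i k : 'I_(hfdim L d)) :
  k != i -> Qd lam i k = 0.
Proof. by move=> ne; rewrite mxE (eq_sym i) (negbTE ne). Qed.

Lemma Qd_ii (R : realType) L d (lam : Cx R) (i : 'I_(hfdim L d)) :
  Qd lam i i = ((Dval (hv i))%:R == lam)%:R.
Proof. by rewrite mxE eqxx. Qed.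

Lemma Qd_spec (R : realType) L d (lam : Cx R) :
  is_spec_proj (D_L R L d) lam (Qd lam).
Proof.
have Ddiag (v : 'cV[Cx R]_(hfdim L d)) i :
    ((D_L R L d - lam%:M) *m v) i 0 = ((Dval (hv i))%:R - lam) * v i 0.
  rewrite mul_diag_l; last first.
    by move=> k ne; rewrite (@subE R) D_LE mxE eq_sym (negbTE ne) mulr0n subrr.
  by rewrite (@subE R) D_LE mxE !eqxx mulr1n.
have Qv (v : 'cV[Cx R]_(hfdim L d)) i : (Qd lam *m v) i 0 = Qd lam i i * v i 0.
  by rewrite mul_diag_l // => k; apply: Qd_diag.
split.
  apply/matrixP => i j; rewrite mul_diag_l; last by move=> k; apply: Qd_diag.
  rewrite Qd_ii; case: eqP => hi; first by rewrite mul1r.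
  rewrite mul0r; case: (eqVneq i j) => [e|ne]; last by rewrite Qd_diag // eq_sym.
  by subst j; rewrite Qd_ii (introF eqP hi).
split.
  apply/matrixP => i j; rewrite mxE.
  case: (eqVneq i j) => [e|ne]; first by subst j; rewrite Qd_ii conjc_nat.
  by rewrite !Qd_diag ?conjc0 // eq_sym.
move=> v; split => h; apply/matrixP => i k; rewrite (ord1 k).
  have := congr1 (fun M : 'cV_(hfdim L d) => M i 0) h; rewrite Ddiag Qv Qd_ii mxE.
  case: eqP => [->|ne]; first by rewrite mul1r.
  move/eqP; rewrite mulf_eq0 subr_eq0 => /orP[/eqP//|/eqP->].
  by rewrite mulr0.
have := congr1 (fun M : 'cV_(hfdim L d) => M i 0) h; rewrite Ddiag Qv Qd_ii mxE.
case: eqP => [->|ne]; first by rewrite subrr mul0r.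
by rewrite mul0r => <-; rewrite mulr0.
Qed.

Lemma spec_projE (R : realType) L d (lam : Cx R) :
  spec_proj (D_L R L d) lam = Qd lam.
Proof.
rewrite /spec_proj; apply: (spec_uniq _ (Qd_spec L d lam)).
by apply: getPex; exists (Qd lam); apply: Qd_spec.
Qed.

Lemma PmE (R : realType) L d (m : int) (i j : 'I_(hfdim L d)) :
  Pm R L d m i j = ((i == j) && ((Dval (hv i))%:Z == m))%:R.
Proof.
have e : ((Dval (hv i))%:R == m%:~R :> Cx R) = ((Dval (hv i))%:Z == m) by rewrite pmulrn eqr_int.
by rewrite /Pm spec_projE mxE e. Qed.

Lemma PkerE (R : realType) L d (i j : 'I_(hfdim L d)) :
  Pker R L d i j = ((i == j) && (Dval (hv i) == 0)%N)%:R.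
Proof. by rewrite /Pker spec_projE mxE pnatr_eq0. Qed.

Lemma Pm_diag (R : realType) L d (m : int) (i k : 'I_(hfdim L d)) :
  k != i -> Pm R L d m i k = 0.
Proof. by move=> ne; rewrite PmE (eq_sym i) (negbTE ne). Qed.

Lemma Pker_diag (R : realType) L d (i k : 'I_(hfdim L d)) :
  k != i -> Pker R L d i k = 0.
Proof. by move=> ne; rewrite PkerE (eq_sym i) (negbTE ne). Qed.

Lemma grade_supp (R : realType) L d (k : int) (B : hfop R L d) i j :
  grade k B i j != 0 -> B i j != 0 /\ (Dval (hv i))%:Z = (Dval (hv j))%:Z + k.
Proof.
rewrite /grade summxE => /sum_neq0 [m _].
rewrite mul_diag_r; last by move=> l ne; apply: Pm_diag; rewrite eq_sym.
rewrite mul_diag_l; last by move=> l ne; apply: Pm_diag.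
rewrite !PmE !eqxx /=.
rewrite !mulf_eq0 !negb_or => /andP[/andP[h1 hB] h3].
move: h1 h3; rewrite !pnatr_eq0 !eqb0 !negbK => /eqP e1 /eqP e3.
by split => //; rewrite e1 e3.
Qed.

Lemma offpart_supp (R : realType) L d (B : hfop R L d) i j :
  offpart B i j != 0 -> B i j != 0 /\ Dval (hv i) != Dval (hv j).
Proof.
rewrite /offpart summxE => /sum_neq0 [k hk /grade_supp [hB e]].
split => //; apply/negP => /eqP e'.
have : (Dval (hv j))%:Z + kval k = (Dval (hv j))%:Z + 0 by rewrite addr0 -e e'.
by move/addrI => hk0; rewrite hk0 eqxx in hk.
Qed.

Lemma iter_ad0 (R : realType) L d n (X : hfop R L d) i j :
  X i j = 0 -> iter n (ad (M_L R L d)) X i j = 0.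
Proof.
move=> X0; elim: n => //= n IH.
rewrite /ad (@subE R) mul_diag_l; last by move=> k ne; apply: M_Ldiag; rewrite eq_sym.
rewrite mul_diag_r; last by move=> k ne; apply: M_Ldiag.
by rewrite IH mulr0 mul0r subrr.
Qed.

Lemma Ih_supp (R : realType) L d (U h : R) (k : int) (G : hfop R L d) i j :
  Ih U h k G i j != 0 -> G i j != 0.
Proof.
apply: contraNN => /eqP G0; apply/eqP; rewrite /Ih.
apply: lim_entry0 => N; rewrite (@scaleE R) summxE big1 ?mulr0 // => n _.
by rewrite (@scaleE R) iter_ad0 ?mulr0.
Qed.

Lemma Ih_off_supp (R : realType) L d (U h : R) (B : hfop R L d) i j :
  Ih_off U h B i j != 0 -> B i j != 0 /\ Dval (hv i) != Dval (hv j).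
Proof.
rewrite /Ih_off summxE => /sum_neq0 [k hk /Ih_supp /grade_supp [hB e]].
split => //; apply/negP => /eqP e'.
have : (Dval (hv j))%:Z + kval k = (Dval (hv j))%:Z + 0 by rewrite addr0 -e e'.
by move/addrI => hk0; rewrite hk0 eqxx in hk.
Qed.

Lemma hop_same L d (a b : config L d) m1 m2 m :
  hop1 a b m1 m2 -> m != m1 -> m != m2 -> a m = b m.
Proof.
case/and3P => _ _ /eqP e ne1 ne2.
by have := congr1 (fun f : config L d => f m) e; rewrite !ffunE (negbTE ne1) (negbTE ne2).
Qed.

Lemma hop_src L d (a b : config L d) m1 m2 :
  hop1 a b m1 m2 -> m1 != m2 -> a m2 = false.
Proof.
case/and3P => _ _ /eqP e ne.
have := congr1 (fun f : config L d => f m2) e; rewrite !ffunE eqxx.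
by rewrite eq_sym (negbTE ne).
Qed.

Lemma hop_dst L d (a b : config L d) m1 m2 :
  hop1 a b m1 m2 -> m1 != m2 -> b m1 = false.
Proof.
case/and3P => _ _ /eqP e ne.
have := congr1 (fun f : config L d => f m1) e; rewrite !ffunE eqxx.
by rewrite (negbTE ne).
Qed.

Lemma hop_a L d (a b : config L d) m1 m2 : hop1 a b m1 m2 -> a m1.
Proof. by case/and3P. Qed.

Lemma hop_eq L d (a b : config L d) m : hop1 a b m m -> a = b.
Proof. by case/and3P => h1 h2 /eqP e; apply: empty_inj h1 h2 e. Qed.

Lemma hop_site L d (a b : config L d) p q s1 s2 z sg :
  hop1 a b (p,s1) (q,s2) -> z != p -> z != q -> a (z,sg) = b (z,sg).
Proof.
move=> H n1 n2; apply: hop_same H _ _; by rewrite xpair_eqE negb_and ?n1 ?n2.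
Qed.

Lemma pneq1 L d (z z' : site L d) (r r' : bool) : z != z' -> (z, r) != (z', r').
Proof. by move=> h; rewrite xpair_eqE negb_and h. Qed.

Lemma pneq2 L d (z z' : site L d) (r : bool) : (z, ~~ r) != (z', r).
Proof. by rewrite xpair_eqE negb_and; case: r; rewrite orbT. Qed.

Lemma dblE L d (b : config L d) z r :
  b (z,r) && b (z,~~r) = b (z,true) && b (z,false).
Proof. by case: r => //; rewrite andbC. Qed.

Lemma Dval0 L d (b : config L d) z :
  Dval b = 0%N -> b (z,true) && b (z,false) = false.
Proof.
move=> h; apply/negP => hz; move: h; rewrite /Dval (bigD1 z) //= hz.
by rewrite add1n.
Qed.

Lemma Dval_pos L d (b : config L d) :
  Dval b != 0%N -> exists z, b (z,true) && b (z,false).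
Proof.
move=> h; have [//|hn] := pselect (exists z, b (z,true) && b (z,false)).
case/negP: h; apply/eqP; rewrite /Dval big1 // => z _.
by apply/eqP; rewrite eqb0; apply/negP => hz; apply: hn; exists z.
Qed.

Lemma full_occ L d (b : config L d) z :
  #|[set m | b m]| = #|{: site L d}| -> Dval b = 0%N -> b (z,true) || b (z,false).
Proof.
move=> hc h0.
have inj : {in [set m | b m] &, injective (fun m : mode L d => m.1)}.
  move=> [z1 s1] [z2 s2]; rewrite !inE /= => h1 h2 ez; subst z2.
  case: (eqVneq s1 s2) => [->//|ne]; exfalso.
  have := Dval0 z1 h0; move: h1 h2 ne.
  by case: s1; case: s2 => //= h1 h2 _; rewrite h1 h2.
have e : (fun m : mode L d => m.1) @: [set m | b m] = [set: site L d].
  apply/eqP; rewrite eqEcard finset.subsetT cardsT card_in_imset //=.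
  exact/eq_leq/esym/hc.
have : z \in (fun m : mode L d => m.1) @: [set m | b m] by rewrite e inE.
case/imsetP => -[z' s]; rewrite inE /= => hb ->.
by case: s hb => ->; rewrite ?orbT.
Qed.

Lemma core L d (a c b : config L d) (u v u' v' : site L d) (s r : bool) :
  #|[set m | b m]| = #|{: site L d}| -> Dval b = 0%N -> Dval a = 0%N ->
  Dval c != 0%N ->
  hop1 c b (v',s) (u',s) -> hop1 a c (v,r) (u,r) -> u = v' /\ v = u'.
Proof.
move=> hc Db Da Dc H1 H2.
have nu' : v' != u'.
  apply/negP => /eqP e; subst u'; move/hop_eq: H1 => e.
  by rewrite e Db in Dc.
have nu : v != u.
  apply/negP => /eqP e; subst u; move/hop_eq: H2 => e.
  by rewrite -e Da in Dc.
have ne1 : (v',s) != (u',s) by rewrite xpair_eqE eqxx andbT.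
have ne2 : (v,r) != (u,r) by rewrite xpair_eqE eqxx andbT.
have nr : r != ~~ r by case: (r).
case: (Dval_pos Dc) => z hz.
have ez : z = v'.
  apply/eqP; apply: contraT => nz.
  case: (eqVneq z u') => [ezu|nzu].
    subst z; move: hz; rewrite -(dblE _ _ s) (hop_src H1 ne1) //.
  by move: hz; rewrite !(hop_site _ H1 nz nzu) Dval0.
subst z.
have evu : v' = u.
  apply/eqP; apply: contraT => n1.
  case: (eqVneq v' v) => [e|n2].
    subst v'.
    by move: hz; rewrite -(dblE _ _ r) (hop_dst H2 ne2).
  by move: hz; rewrite -!(hop_site _ H2 n2 n1) Dval0.
subst u; split => //.
apply/eqP; apply: contraT => n3.
have nvv : v != v' by [].
have cb sg : c (v, sg) = b (v, sg) by apply: (hop_site _ H1 nvv n3).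
have c0 : c (v, r) = false by apply: (hop_dst H2 ne2).
have b1 : b (v, ~~ r).
  have := full_occ v hc Db; rewrite cb in c0.
  by move: c0; case: (r) => /= ->; rewrite ?orbF => h.
have h1 := hop_a H2.
have h2 : a (v, ~~r) = c (v, ~~r).
  by apply: hop_same H2 _ _; [apply: pneq2 | apply: pneq2].
have := Dval0 v Da; rewrite -(dblE _ _ r) h1 h2 cb b1.
by [].
Qed.

Lemma core2 L d (a c b : config L d) (x y x' y' : site L d) (s r : bool) :
  #|[set m | b m]| = #|{: site L d}| -> Dval b = 0%N -> Dval a = 0%N ->
  Dval c != 0%N ->
  hop1 c b (x',s) (y',s) || hop1 c b (y',s) (x',s) ->
  hop1 a c (x,r) (y,r) || hop1 a c (y,r) (x,r) ->
  [set x; y] = [set x'; y'].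
Proof.
move=> hc Db Da Dc /orP[H1|H1] /orP[H2|H2];
  have [e1 e2] := core hc Db Da Dc H1 H2; rewrite e1 e2 //;
  exact: finset.setUC.
Qed.

Lemma mulE (R : realType) n (A B : 'M[Cx R]_n) i j :
  (A *m B) i j = \sum_k A i k * B k j.
Proof. by rewrite mxE. Qed.

Lemma card_cl L d (b : config L d) :
  #|[set m | b m]%classic| = #|[set m | b m]|.
Proof.
apply: eq_card => m; rewrite [RHS]inE; apply/idP/idP.
  by move/set_mem.
by move=> hb; apply: mem_set.
Qed.

Unset Implicit Arguments.
Set Strict Implicit.

Theorem lemmaB1 (R : realType) (L d : nat) (hL : ~~ odd L)
    (t h0 U h : R) (hh0 : 0 < h0) (hU : 2 * h0 < U) (hh : `|h| <= h0)
    (x y x' y' : site L d) (he : nn x y) (he' : nn x' y')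
    (hne : [set x; y] != [set x'; y']) :
  Pker R L d *m
    diagpart (ad (Ih_off U h (T_e t x y)) (offpart (T_e t x' y')))
  *m Pker R L d = 0.
Proof.
apply/matrixP => i j.
rewrite mul_diag_r; last by move=> k ne; apply: Pker_diag; rewrite eq_sym.
rewrite mul_diag_l; last by move=> k ne; apply: Pker_diag.
rewrite !PkerE !eqxx /= [RHS]mxE.
have F0 : ((false : nat)%:R : Cx R) = 0 by [].
case: eqP => hi; last by rewrite F0 !mul0r.
case: eqP => hj; last by rewrite F0 !mulr0.
set I := Ih_off U h (T_e t x y).
set B := offpart (T_e t x' y').
have hcard : #|[set m | hv j m]| = #|{: site L d}|.
  by rewrite -card_cl; exact: (eqP (valP (enum_val j))).
have T1 k : I i k * B k j = 0.
  have [hI|hI] := eqVneq (I i k) 0; first by rewrite hI mul0r.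
  have [hB|hB] := eqVneq (B k j) 0; first by rewrite hB mulr0.
  exfalso; case/Ih_off_supp: hI => hT1 nik; case/offpart_supp: hB => hT2 nkj.
  case/T_e_supp: hT1 => r H2; case/T_e_supp: hT2 => s H1.
  have Dk : Dval (hv k) != 0%N by rewrite hj in nkj.
  have e := core2 hcard hj hi Dk H1 H2.
  by rewrite e eqxx in hne.
have T2 k : B i k * I k j = 0.
  have [hB|hB] := eqVneq (B i k) 0; first by rewrite hB mul0r.
  have [hI|hI] := eqVneq (I k j) 0; first by rewrite hI mulr0.
  exfalso; case/Ih_off_supp: hI => hT1 nkj; case/offpart_supp: hB => hT2 nik.
  case/T_e_supp: hT1 => r H1; case/T_e_supp: hT2 => s H2.
  have Dk : Dval (hv k) != 0%N by rewrite hj in nkj.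
  have e := core2 hcard hj hi Dk H1 H2.
  by rewrite e eqxx in hne.
have X0 : ad I B i j = 0.
  rewrite /ad (@subE R) !mulE.
  rewrite big1; last by move=> k _; exact: T1.
  rewrite big1; last by move=> k _; exact: T2.
  by rewrite subrr.
have [Y0|Y0] := eqVneq (diagpart (ad I B) i j) 0; first by rewrite Y0 mulr0 mul0r.
by case/grade_supp: Y0 => /eqP; rewrite X0.
Qed.
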